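(* Let $G$ be a primitive strongly regular graph with parameters $(v,k,\lambda,\mu)$. Then $k/\Lambda(G) > \sqrt{k/\sqrt{v}}$.
   Context: A graph is strongly regular with parameters $(v,k,\lambda,\mu)$ if it is a $k$-regular graph on $v$ vertices such that each edge lies in exactly $\lambda$ triangles and any two distinct non-adjacent vertices have exactly $\mu$ common neighbours; complete and edgeless graphs are excluded. A strongly regular graph is primitive if both it and its complement are connected. For a $k$-regular graph with adjacency eigenvalues $k=\lambda_1\ge\dots\ge\lambda_v$, $\Lambda(G)=\max\{|\lambda_i|: 2\le i\le v\}$. *)

(* Defs.v *)
From mathcomp Require Import all_boot all_order all_algebra.
From mathcomp Require Import reals.
Set Implicit Arguments. Unset Strict Implicit. Unset Printing Implicit Defensive.
Import Order.TTheory GRing.Theory Num.Theory.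
Local Open Scope ring_scope.

Definition simple_graph (v : nat) (e : rel 'I_v) : Prop :=
  symmetric e /\ irreflexive e.

Definition common_nbrs (v : nat) (e : rel 'I_v) (x y : 'I_v) : {set 'I_v} :=
  [set z | e x z && e y z].

(* Strongly regular with parameters (v,k,lam,mu); complete and edgeless
   graphs are excluded. *)
Definition srg (v k lam mu : nat) (e : rel 'I_v) : Prop :=
  simple_graph e /\
  (forall x : 'I_v, #|[set y | e x y]| = k) /\
  (forall x y : 'I_v, e x y -> #|common_nbrs e x y| = lam) /\
  (forall x y : 'I_v, x != y -> ~~ e x y -> #|common_nbrs e x y| = mu) /\
  (exists x y : 'I_v, e x y) /\
  (exists x y : 'I_v, (x != y) && ~~ e x y).

Definition complement_rel (v : nat) (e : rel 'I_v) : rel 'I_v :=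
  fun x y => (x != y) && ~~ e x y.

Definition connected_graph (v : nat) (e : rel 'I_v) : Prop :=
  forall x y : 'I_v, connect e x y.

Definition primitive_graph (v : nat) (e : rel 'I_v) : Prop :=
  connected_graph e /\ connected_graph (complement_rel e).

Definition adjacency (R : realType) (v : nat) (e : rel 'I_v) : 'M[R]_v :=
  \matrix_(i, j) (e i j)%:R.

Definition eigen_list (R : realType) (v : nat) (A : 'M[R]_v) (s : seq R) : Prop :=
  char_poly A = \prod_(x <- s) ('X - x%:P) /\ sorted >=%R s.

(* Lambda(G) = max { |lambda_i| : 2 <= i <= v } for the sorted eigenvalue list. *)
Definition Lambda (R : realType) (s : seq R) : R :=
  \big[Num.max/0]_(x <- behead s) `|x|.

(* Main.v *)
Require Import Defs.
From mathcomp Require Import all_boot all_order all_algebra.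
From mathcomp Require Import reals ring lra.
Set Implicit Arguments. Unset Strict Implicit. Unset Printing Implicit Defensive.
Import Order.TTheory GRing.Theory Num.Theory.
Local Open Scope ring_scope.

Section Poly.
Variable R : realType.

Lemma cp_size n (A : 'M[R]_n) (s : seq R) :
  char_poly A = \prod_(x <- s) ('X - x%:P) -> size s = n.
Proof.
move=> h; have := size_char_poly A; rewrite h size_prod_XsubC.
by case.
Qed.

Lemma cp_trace n (A : 'M[R]_n) (s : seq R) :
  char_poly A = \prod_(x <- s) ('X - x%:P) -> \tr A = \sum_(x <- s) x.
Proof.
move=> h; have hs := cp_size h.
case: n A h hs => [|n] A h hs.
  by rewrite (size0nil hs) big_nil /mxtrace big_ord0.
have := char_poly_trace A; rewrite /= h.
  have e : (size s).-1 = n by rewrite hs.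
  move=> /(_ isT); rewrite -[X in _`_X]e coefPn_prod_XsubC ?hs //.
by move=> /eqP; rewrite eqr_opp => /eqP ->.
Qed.

Lemma compX2_inj (p q : {poly R}) : p \Po 'X^2 = q \Po 'X^2 -> p = q.
Proof.
move=> h; apply/polyP => i.
have := congr1 (fun r : {poly R} => r`_(2 * i)%N) h => /=.
by rewrite !coef_comp_poly_Xn // dvdn_mulr // mulKn.
Qed.

Lemma map_comp_cpmx n (A : 'M[R]_n) (q : {poly R}) :
  map_mx (comp_poly q) (char_poly_mx A) = q%:M - map_mx polyC A.
Proof.
apply/matrixP => i j; rewrite !mxE /=.
by rewrite raddfB raddfMn /= comp_polyX comp_polyC.
Qed.

Lemma prodN_seq (T : Type) (s : seq T) (F : T -> {poly R}) :
  \prod_(x <- s) - F x = (-1) ^+ size s * \prod_(x <- s) F x.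
Proof.
elim: s => [|a s IH]; first by rewrite !big_nil mul1r.
by rewrite !big_cons IH /= exprS mulN1r !mulNr mulrCA.
Qed.

Lemma cp_sq n (A : 'M[R]_n) (s : seq R) :
  char_poly A = \prod_(x <- s) ('X - x%:P) ->
  char_poly (A *m A) = \prod_(x <- s) ('X - (x ^+ 2)%:P).
Proof.
move=> h; have hs := cp_size h.
apply: compX2_inj.
set Ap := map_mx (@polyC R) A.
have e1 : char_poly (A *m A) \Po 'X^2 = \det (('X%:M - Ap) *m ('X%:M + Ap)).
  rewrite /char_poly -det_map_mx map_comp_cpmx; congr (\det _).
  rewrite mulmxDr !mulmxBl map_mxM -/Ap addrA.
  rewrite (scalar_mxC 'X Ap) subrK mul_scalar_mx scale_scalar_mx -expr2.
  by [].
have e2 : \det ('X%:M + Ap) = \prod_(x <- s) ('X + x%:P).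
  have := det_map_mx (comp_poly (- 'X : {poly R})) (char_poly_mx A).
  rewrite map_comp_cpmx -/(char_poly A) h rmorph_prod /=.
  have -> : (- 'X)%:M - Ap = - ('X%:M + Ap) by rewrite opprD raddfN.
  rewrite -scaleN1r detZ.
  under eq_bigr => x _ do rewrite comp_polyB comp_polyX comp_polyC -opprD.
  rewrite prodN_seq hs => /(congr1 (fun p => (-1) ^+ n * p)).
  by rewrite !signrMK.
rewrite e1 det_mulmx e2.
have -> : \det ('X%:M - Ap) = char_poly A by [].
rewrite h.
rewrite -big_split /= rmorph_prod /=.
apply: eq_bigr => x _.
by rewrite -subr_sqr comp_polyB comp_polyX comp_polyC rmorphXn.
Qed.
End Poly.

Section Rank.
Variable R : realType.

Lemma rank_idem n (E : 'M[R]_n) : E *m E = E -> (\rank E)%:R = \tr E.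
Proof.
move=> idem.
suff key : forall r (P : 'M[R]_(n, r)) Q, E = P *m Q -> row_full P -> row_free Q ->
    r%:R = \tr E.
  exact: key (esym (mulmx_base E)) (col_base_full E) (row_base_free E).
move=> r P Q hE /row_fullP [BP hBP] /row_freeP [BQ hBQ].
have QP : Q *m P = 1%:M.
  have := congr1 (fun M => BP *m M *m BQ) idem; rewrite /= hE.
  rewrite !mulmxA hBP mul1mx -mulmxA hBQ mulmx1.
  by [].
by rewrite hE mxtrace_mulC QP mxtrace1.
Qed.

Lemma rank_sum m n (I : Type) (r : seq I) (P : pred I) (X : I -> 'M[R]_(m, n))
  (c : I -> nat) :
  (forall i, P i -> (mxrank (X i) <= c i)%N) ->
  (mxrank (\sum_(i <- r | P i) X i)%R <= \sum_(i <- r | P i) c i)%N.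
Proof.
move=> h; apply: (big_ind2 (fun M k => \rank M <= k)%N) => //.
  by rewrite mxrank0.
move=> M1 k1 M2 k2 h1 h2; apply: leq_trans (mxrank_add _ _) _.
exact: leq_add.
Qed.

Lemma had_bound n (F : 'M[R]_n) (a b d : R) : d != 0 ->
  (forall i j, (F i j - a) * (F i j - b) = (i == j)%:R * d) ->
  (n <= \rank F * \rank F + \rank F + 1)%N.
Proof.
move=> d0 hF.
pose M := \matrix_(i, j) ((F i j - a) * (F i j - b)).
have hM : M = d%:M.
  by apply/matrixP => i j; rewrite !mxE hF mulr_natl.
have rM : \rank M = n by rewrite hM -scalemx1 mxrank_scale_nz // mxrank1.
pose H := \matrix_(i, j) (F i j * F i j).
pose J := const_mx 1 : 'M[R]_n.
have hM2 : M = H + (- (a + b)) *: F + (a * b) *: J.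
  by apply/matrixP => i j; rewrite !mxE; ring.
have rJ : (\rank J <= 1)%N.
  have -> : J = (const_mx 1 : 'M[R]_(n, 1)) *m const_mx 1.
    by apply/matrixP => i j; rewrite !mxE big_ord1 !mxE mulr1.
  exact: leq_trans (mxrankM_maxl _ _) (rank_leq_col _).
set r := \rank F.
have rH : (\rank H <= r * r)%N.
  set P := col_base F; set Q := row_base F.
  have hH : H = \sum_(a0 < r) \sum_(b0 < r)
      ((\col_i (P i a0 * P i b0)) *m (\row_j (Q a0 j * Q b0 j))).
    apply/matrixP => i j; rewrite mxE summxE.
    under eq_bigr do rewrite summxE.
    have := congr1 (fun M : 'M[R]_n => M i j) (mulmx_base F); rewrite /= mxE -/P -/Q => <-.
    rewrite mulr_suml; apply: eq_bigr => a0 _; rewrite mulr_sumr.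
    by apply: eq_bigr => b0 _; rewrite !mxE big_ord1 !mxE; ring.
  rewrite hH.
  apply: leq_trans.
    apply: (@rank_sum _ _ _ _ _ _ (fun _ => r)) => a0 _.
    apply: leq_trans.
      apply: (@rank_sum _ _ _ _ _ _ (fun _ => 1%N)) => b0 _.
      exact: leq_trans (mxrankM_maxl _ _) (rank_leq_col _).
    by rewrite sum_nat_const card_ord muln1.
  by rewrite sum_nat_const card_ord.
rewrite -{1}rM hM2.
apply: leq_trans (mxrank_add _ _) _.
apply: leq_add; last exact: leq_trans (mxrank_scale _ _) rJ.
apply: leq_trans (mxrank_add _ _) _.
apply: leq_add => //.
exact: mxrank_scale.
Qed.

End Rank.

Lemma sum_bool (R : realType) (T : finType) (P : pred T) :
  \sum_(z : T) ((P z)%:R : R) = #|P|%:R.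
Proof.
rewrite (eq_bigr (fun z => if P z then 1 else 0)); last by move=> z _; case: (P z).
by rewrite -big_mkcond sumr_const.
Qed.

Lemma sum_count (R : realType) (s : seq R) (a c : R) :
  \sum_(x <- s) ((x == a)%:R * c) = (count_mem a s)%:R * c.
Proof.
elim: s => [|b s IH]; first by rewrite big_nil mul0r.
by rewrite big_cons IH /= natrD mulrDl.
Qed.

Lemma sum_const_seq (R : realType) (T : Type) (s : seq T) (c : R) :
  \sum_(x <- s) c = (size s)%:R * c.
Proof.
elim: s => [|b s IH]; first by rewrite big_nil mul0r.
by rewrite big_cons IH /= -addn1 natrD mulrDl mul1r addrC.
Qed.

Lemma eq_lin3 (R : realType) (m1 m2 m3 a b c1 d1 c2 d2 c3 d3 : R) :
  c1 = d1 -> c2 = d2 -> c3 = d3 ->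
  a - b = m1 * (c1 - d1) + m2 * (c2 - d2) + m3 * (c3 - d3) -> a = b.
Proof.
move=> -> -> -> /eqP; rewrite !subrr !mulr0 !addr0 subr_eq0 => /eqP //.
Qed.

Section Graph.
Variables (R : realType) (v k lam mu : nat) (e : rel 'I_v).
Hypotheses (esym : symmetric e) (eirr : irreflexive e)
  (hdeg : forall x : 'I_v, #|[set y | e x y]| = k)
  (hlam : forall x y : 'I_v, e x y -> #|common_nbrs e x y| = lam)
  (hmu : forall x y : 'I_v, x != y -> ~~ e x y -> #|common_nbrs e x y| = mu).

Local Notation A := (adjacency R e).
Local Notation J := (const_mx 1 : 'M[R]_v).

Lemma adjE i j : A i j = (e i j)%:R.
Proof. by rewrite /adjacency mxE. Qed.

Lemma AA : A *m A = k%:R *: 1%:M + lam%:R *: A + mu%:R *: (J - 1%:M - A).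
Proof.
apply/matrixP => i j; rewrite !mxE.
have -> : \sum_z A i z * A z j = #|[pred z | e i z && e j z]|%:R.
  rewrite -sum_bool; apply: eq_bigr => z _; rewrite !adjE /= (esym z j).
  by case: (e i z); case: (e j z); rewrite ?mulr1 ?mulr0 ?mul0r.
have cE : forall x y, #|[pred z | e x z && e y z]| = #|common_nbrs e x y|.
  by move=> x y; rewrite /common_nbrs cardsE.
rewrite cE ?adjE.
have [->|nij] := eqVneq i j.
  rewrite eirr /=.
  have -> : common_nbrs e j j = [set y | e j y].
    by apply/setP => z; rewrite !inE andbb.
  by rewrite hdeg; ring.
case eij: (e i j).
  rewrite hlam //=; ring.
rewrite hmu ?eij //=; ring.
Qed.

Lemma AJ : A *m J = k%:R *: J.
Proof.
apply/matrixP => i j; rewrite !mxE.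
have -> : \sum_z A i z * J z j = #|[pred z | e i z]|%:R.
  by rewrite -sum_bool; apply: eq_bigr => z _; rewrite !mxE ?adjE mulr1.
by rewrite -(hdeg i) cardsE mulr1.
Qed.

Lemma JA : J *m A = k%:R *: J.
Proof.
apply/matrixP => i j; rewrite !mxE.
have -> : \sum_z J i z * A z j = #|[pred z | e j z]|%:R.
  by rewrite -sum_bool; apply: eq_bigr => z _; rewrite !mxE ?adjE mul1r esym.
by rewrite -(hdeg j) cardsE mulr1.
Qed.

Lemma JJ : J *m J = v%:R *: J.
Proof.
apply/matrixP => i j; rewrite !mxE.
under eq_bigr => z _ do rewrite !mxE mulr1.
by rewrite sumr_const card_ord mulr1.
Qed.

Lemma trA : \tr A = 0.
Proof. by rewrite /mxtrace big1 // => i _; rewrite adjE eirr. Qed.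

Lemma trJ : \tr J = v%:R.
Proof. by rewrite /mxtrace (eq_bigr (fun _ => 1)) ?sumr_const ?card_ord // => i _; rewrite mxE. Qed.

Definition BM (a b c : R) : 'M[R]_v := a *: 1%:M + b *: A + c *: J.

Lemma BM_mul a1 b1 c1 a2 b2 c2 :
  BM a1 b1 c1 *m BM a2 b2 c2 =
  BM (a1 * a2 + b1 * b2 * (k%:R - mu%:R))
     (a1 * b2 + b1 * a2 + b1 * b2 * (lam%:R - mu%:R))
     (a1 * c2 + c1 * a2 + b1 * b2 * mu%:R + k%:R * (b1 * c2 + c1 * b2)
       + v%:R * c1 * c2).
Proof.
rewrite /BM !mulmxDl !mulmxDr.
rewrite -!scalemxAl -!scalemxAr !scalerA !(mul1mx, mulmx1) AA AJ JA JJ.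
apply/matrixP => i j; rewrite !mxE ?adjE.
ring.
Qed.


Lemma A_BM : A = BM 0 1 0.
Proof. by rewrite /BM !scale0r add0r addr0 scale1r. Qed.

Lemma J_BM : J = BM 0 0 1.
Proof. by rewrite /BM !scale0r !add0r scale1r. Qed.

Lemma AA_BM : A *m A = BM (k%:R - mu%:R) (lam%:R - mu%:R) mu%:R.
Proof.
rewrite AA /BM; apply/matrixP => i j; rewrite !mxE; ring.
Qed.

Lemma BM_inj_c (i0 : 'I_v) c1 c2 : BM 0 0 c1 = BM 0 0 c2 -> c1 = c2.
Proof.
move=> /matrixP /(_ i0 i0); rewrite !mxE ?adjE.
by rewrite !mul0r !add0r !mulr1.
Qed.

Lemma BM_diag i a b c : BM a b c i i = a + c.
Proof. by rewrite /BM !mxE ?adjE eirr eqxx /=; ring. Qed.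

Lemma eq_lin (m a b c d : R) : c = d -> a - b = m * (c - d) -> a = b.
Proof. by move=> -> /eqP; rewrite subrr mulr0 subr_eq0 => /eqP. Qed.

Lemma kk (i0 : 'I_v) :
  k%:R ^+ 2 = k%:R + lam%:R * k%:R + mu%:R * (v%:R - 1 - k%:R) :> R.
Proof.
have h : (A *m A) *m J = A *m (A *m J) by rewrite mulmxA.
rewrite AA_BM A_BM J_BM !BM_mul in h.
have := congr1 (fun M : 'M[R]_v => M i0 i0) h; rewrite /= !BM_diag => hh.
by apply: (@eq_lin (-1) _ _ _ _ hh); ring.
Qed.

Lemma uBM (u : 'rV[R]_v) a b c :
  u *m BM a b c = a *: u + b *: (u *m A) + c *: (u *m J).
Proof. by rewrite /BM !mulmxDr -!scalemxAr mulmx1. Qed.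

Definition Pq (x : R) := x ^+ 2 - (lam%:R - mu%:R) * x - (k%:R - mu%:R).

Lemma eig_root (s : seq R) x :
  char_poly A = \prod_(y <- s) ('X - y%:P) -> x \in s -> x = k%:R \/ Pq x = 0.
Proof.
move=> hc xs.
have : eigenvalue A x by rewrite eigenvalue_root_char hc root_prod_XsubC.
move=> /eigenvalueP [u hu u0].
have hJ : (x - k%:R) *: (u *m J) = 0.
  have h1 : u *m A *m J = x *: (u *m J) by rewrite hu -scalemxAl.
  have h2 : u *m A *m J = k%:R *: (u *m J) by rewrite -mulmxA AJ -scalemxAr.
  by rewrite scalerBl -h1 -h2 subrr.
have [xk|xk] := eqVneq x k%:R; first by left.
right.
have uJ : u *m J = 0.
  by move/eqP: hJ; rewrite scalemx_eq0 subr_eq0 (negbTE xk) /= => /eqP.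
have h3 : u *m (A *m A) = (x * x) *: u.
  by rewrite mulmxA hu -scalemxAl hu scalerA.
rewrite AA_BM uBM uJ scaler0 addr0 hu scalerA -scalerDl in h3.
move/eqP: h3; rewrite -subr_eq0 -scalerBl scalemx_eq0 (negbTE u0) orbF => /eqP h3.
by rewrite /Pq -[RHS](oppr0) -h3; ring.
Qed.

Lemma k_pos : (exists x y, e x y) -> (0 < k)%N.
Proof.
move=> [x [y exy]]; rewrite -(hdeg x); apply/card_gt0P; exists y; by rewrite inE.
Qed.

Lemma lam_lt_k : (exists x y, e x y) -> (lam < k)%N.
Proof.
move=> [x [y exy]]; rewrite -(hlam exy) -(hdeg x).
have sub : common_nbrs e x y \subset [set z | e x z] :\ y.
  apply/subsetP => z; rewrite !inE => /andP [h1 h2]; rewrite h1 andbT.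
  by apply/eqP => zy; rewrite zy eirr in h2.
rewrite (cardsD1 y [set z | e x z]) inE exy.
exact: leq_ltn_trans (subset_leq_card sub) _.
Qed.

Lemma mu_le_k : (exists x y, (x != y) && ~~ e x y) -> (mu <= k)%N.
Proof.
move=> [x [y /andP [nxy nexy]]]; rewrite -(hmu nxy nexy) -(hdeg x).
apply: subset_leq_card; apply/subsetP => z; rewrite !inE => /andP [] //.
Qed.

Lemma v_ge : (exists x y, (x != y) && ~~ e x y) -> (k.+2 <= v)%N.
Proof.
move=> [x [y /andP [nxy nexy]]].
have sub : [set z | e x z] \subset [set: 'I_v] :\ x :\ y.
  apply/subsetP => z; rewrite !inE andbT => exz.
  apply/andP; split.
    by apply: contraNneq nexy => <-.
  by apply: contraTneq exz => ->; rewrite eirr.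
have := subset_leq_card sub; rewrite hdeg => hk.
have h1 := cardsD1 x [set: 'I_v]; rewrite cardsT card_ord inE in h1.
have h2 := cardsD1 y ([set: 'I_v] :\ x); rewrite !inE eq_sym nxy /= in h2.
rewrite h1 h2; rewrite add1n add1n ltnS ltnS. exact: hk.
Qed.

Lemma mu_pos : connected_graph e -> (exists x y, (x != y) && ~~ e x y) -> (0 < mu)%N.
Proof.
move=> hc [x [y /andP [nxy nexy]]]; rewrite lt0n; apply/negP => /eqP mu0.
have trans : forall a b c, e a b -> e b c -> (a == c) || e a c.
  move=> a b c eab ebc; have [//|nac] := eqVneq a c; apply/negPn/negP => neac.
  have := hmu nac neac; rewrite mu0 => /eqP; rewrite cards_eq0 => /eqP/setP/(_ b).
  by rewrite !inE eab (esym c b) ebc.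
have key : forall p a, path e a p -> (a == last a p) || e a (last a p).
  elim => [|z p IH] a /=; first by rewrite eqxx.
  move=> /andP [eaz pz]; have := IH z pz; case/orP => [/eqP <-|ez].
    by rewrite eaz orbT.
  exact: trans eaz ez.
have := hc x y; case/connectP => p hp hy; have := key p x hp.
by rewrite -hy (negbTE nxy) (negbTE nexy).
Qed.

Lemma mu_lt_k : connected_graph (complement_rel e) -> (exists x y, e x y) ->
  (exists x y, (x != y) && ~~ e x y) -> (mu < k)%N.
Proof.
move=> hc [a0 [b0 eab]] hp; rewrite ltn_neqAle mu_le_k // andbT.
apply/negP => /eqP muk.
have nb : forall a b, complement_rel e a b -> [set z | e a z] = [set z | e b z].
  move=> a b /andP [nab neab].
  have hc1 : common_nbrs e a b = [set z | e a z].
    apply/eqP; rewrite eqEcard hmu // muk hdeg leqnn andbT.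
    by apply/subsetP => z; rewrite !inE => /andP [].
  have hc2 : common_nbrs e a b = [set z | e b z].
    apply/eqP; rewrite eqEcard hmu // muk hdeg leqnn andbT.
    by apply/subsetP => z; rewrite !inE => /andP [].
  by rewrite -hc1 hc2.
have key : forall p a, path (complement_rel e) a p ->
    [set z | e a z] = [set z | e (last a p) z].
  elim => [|z p IH] a //= /andP [caz pz].
  by rewrite (nb _ _ caz) (IH z pz).
have := hc a0 b0; case/connectP => p hpp hy; have := key p a0 hpp; rewrite -hy.
move=> /setP /(_ b0); rewrite !inE eab eirr //.
Qed.

Lemma BM_E i j a b c : BM a b c i j = a * (i == j)%:R + b * (e i j)%:R + c.
Proof. by rewrite /BM !mxE ?adjE; ring. Qed.

Lemma BM_scale (r a b c : R) : r *: BM a b c = BM (r * a) (r * b) (r * c).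
Proof. by rewrite /BM !scalerDr !scalerA. Qed.

Lemma trBM a b c : \tr (BM a b c) = a * v%:R + c * v%:R.
Proof.
rewrite /BM !mxtraceD !mxtraceZ mxtrace1 trA trJ; ring.
Qed.

Lemma core (i0 : 'I_v) (t : seq R) (x y : R) :
  (0 < mu)%N -> (mu < k)%N -> (lam.+2 <= k)%N ->
  x + y = lam%:R - mu%:R -> x * y = mu%:R - k%:R ->
  (forall z, z \in t -> z = x \/ z = y) ->
  size t = v.-1 -> \sum_(z <- t) z = - k%:R ->
  \sum_(z <- t) z ^+ 2 = v%:R * k%:R - k%:R ^+ 2 ->
  (v <= (count_mem x t) * (count_mem x t) + count_mem x t + 1)%N /\
  (count_mem x t)%:R * x ^+ 2 <= v%:R * k%:R - k%:R ^+ 2.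
Proof.
move=> mu0 muk lamk hs hp hxy hsz hsum hsq.
set c := count_mem x t.
have vpos : (0 < v)%N by apply: leq_ltn_trans (leq0n i0) (ltn_ord i0).
have v0 : v%:R != 0 :> R by rewrite pnatr_eq0 -lt0n.
have hmuk : mu%:R < k%:R :> R by rewrite ltr_nat.
have xney : x != y.
  apply/eqP => exy; rewrite exy in hp.
  have := sqr_ge0 y; rewrite expr2 hp; lra.
have hcount : c%:R * (x - y) = - k%:R - y * (v%:R - 1).
  have e1 : \sum_(z <- t) (z - y) = c%:R * (x - y).
    rewrite -sum_count; apply: eq_big_seq => z zt.
    case: (hxy z zt) => ->; first by rewrite eqxx mul1r.
    by rewrite eq_sym (negbTE xney) mul0r subrr.
  rewrite -e1 sumrB hsum sum_const_seq hsz.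
  have -> : (v.-1)%:R = v%:R - 1 :> R.
    by rewrite -{2}(prednK vpos) -addn1 natrD addrK.
  ring.
have hsq2 : c%:R * x ^+ 2 <= v%:R * k%:R - k%:R ^+ 2.
  rewrite -hsq -sum_count; apply: ler_sum => z _.
  have [->|_] := eqVneq z x; first by rewrite mul1r.
  by rewrite mul0r sqr_ge0.
split => //.
have hmv : mu%:R * v%:R = (k%:R - x) * (k%:R - y).
  have hk := kk i0.
  by apply: (@eq_lin3 _ (-1) k%:R (-1) _ _ _ _ _ _ _ _ hk hs hp); ring.
have xy0 : x - y != 0 by rewrite subr_eq0.
set t0 := - (k%:R - y) / v%:R.
set F := BM (- y) 1 t0.
set E := (x - y)^-1 *: F.
have FF : F *m F = (x - y) *: F.
  rewrite /F BM_mul BM_scale; congr BM.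
  - by apply: (@eq_lin3 _ 1 0 0 _ _ _ _ _ _ _ _ hp hp hp); ring.
  - by apply: (@eq_lin3 _ (-1) 0 0 _ _ _ _ _ _ _ _ hs hs hs); ring.
  - apply: (@eq_lin3 _ (v%:R^-1) 0 0 _ _ _ _ _ _ _ _ hmv hmv hmv).
    by rewrite /t0; field.
have EE : E *m E = E.
  rewrite /E -scalemxAl -scalemxAr FF !scalerA; congr (_ *: F); field.
  exact: xy0.
have hc : c%:R = (- k%:R - y * (v%:R - 1)) / (x - y).
  by rewrite -hcount; field.
have trE : \tr E = c%:R.
  rewrite /E mxtraceZ /F trBM hc /t0; field.
  by rewrite xy0 v0.
have rE : \rank E = c.
  by apply/eqP; rewrite -(eqr_nat R) rank_idem // trE.
have rF : \rank F = c.
  have -> : F = (x - y) *: E by rewrite /E scalerA mulfV // scale1r.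
  by rewrite mxrank_scale_nz.
have y0 : y != 0.
  apply/eqP => y0; rewrite y0 mulr0 in hp; lra.
have y1 : y + 1 != 0.
  apply/eqP => y1.
  have : (-1 - x) * (-1 - y) = 0.
    have -> : -1 - y = - (y + 1) by ring.
    by rewrite y1 oppr0 mulr0.
  have hl : (lam.+2)%:R <= k%:R :> R by rewrite ler_nat.
  rewrite -addn2 natrD in hl.
  have : (-1 - x) * (-1 - y) = 1 + (x + y) + x * y by ring.
  rewrite hs hp => ->; lra.
have := @had_bound R v F (1 + t0) t0 (y * (y + 1)) (mulf_neq0 y0 y1).
rewrite rF; apply => i j; rewrite /F BM_E.
have [->|nij] := eqVneq i j; first by rewrite eirr /=; ring.
by case: (e i j) => /=; ring.
Qed.

End Graph.

Lemma fin_arith (R : realType) (K V X C : R) : 0 < K -> 1 <= C ->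
  V <= C * C + C + 1 -> C * X ^+ 2 <= V * K - K ^+ 2 -> X ^+ 2 <= K ^+ 2 ->
  X ^+ 2 < K * Num.sqrt V.
Proof.
move=> K0 C1 hV hCX hXK.
have X2 : 0 <= X ^+ 2 := sqr_ge0 X.
have V0 : 0 <= V by nra.
set w := Num.sqrt V.
have hw : w ^+ 2 = V by rewrite sqr_sqrtr.
have w0 : 0 <= w by apply: sqrtr_ge0.
case: (ltrP K w) => hKw.
  by nra.
have wC : w < C + 1.
  rewrite ltNge; apply/negP => hCw.
  have : (C + 1) ^+ 2 <= w ^+ 2 by rewrite ler_sqr ?nnegrE //; lra.
  by rewrite hw; nra.
have h1 : C * X ^+ 2 <= K * w * (w - 1) by nra.
have h2 : K * w * (w - 1) < K * w * C.
  have Kw : 0 < K * w.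
    apply: mulr_gt0 => //; rewrite lt_neqAle w0 andbT; apply/negP => /eqP w00.
    by move: hw; rewrite -w00 expr0n /= => hV0; nra.
  by rewrite ltr_pM2l //; lra.
nra.
Qed.

Lemma root_bounds (R : realType) (K L M x : R) : 1 <= K -> 0 <= L -> L + 1 <= K ->
  0 <= M -> M <= K -> x ^+ 2 - (L - M) * x - (K - M) = 0 -> - K <= x <= K.
Proof.
move=> K1 L0 LK M0 MK hx.
apply/andP; split.
  rewrite leNgt; apply/negP => hlt; nra.
rewrite leNgt; apply/negP => hlt; nra.
Qed.

Lemma fin2 (R : realType) (K w z : R) : 0 < K -> 0 < w -> z != 0 ->
  z ^+ 2 < K * w -> Num.sqrt (K / w) < K / `|z|.
Proof.
move=> K0 w0 z0 hz.
have az : 0 < `|z| by rewrite normr_gt0.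
have Kz : 0 <= K / `|z| by rewrite divr_ge0 // ltW.
rewrite -[K / `|z|]ger0_norm // -sqrtr_sqr ltr_sqrt; last first.
  by rewrite exprn_gt0 // divr_gt0.
rewrite expr_div_n real_normK ?num_real //.
have z2 : 0 < z ^+ 2 by rewrite exprn_even_gt0.
rewrite -subr_gt0.
have -> : K ^+ 2 / z ^+ 2 - K / w = K * (K * w - z ^+ 2) / (w * z ^+ 2).
  by field; rewrite -?expf_eq0 ?z0 ?lt0r_neq0 //= ?(lt0r_neq0 w0) // andbT; apply/andP; split; rewrite ?lt0r_neq0.
apply: divr_gt0; apply: mulr_gt0 => //; lra.
Qed.

Lemma bigmax_attain (R : realType) (t : seq R) : t != [::] ->
  exists2 z, z \in t & \big[Num.max/0]_(x <- t) `|x| = `|z|.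
Proof.
elim: t => [//|a t IH] _.
rewrite big_cons.
case: (eqVneq t [::]) => [->|tn].
  by exists a; rewrite ?mem_head // big_nil; apply/max_idPl.
have [z zt ->] := IH tn.
case: (leP `|a| `|z|) => h.
  by exists z; rewrite ?in_cons ?zt ?orbT //; apply/max_idPr.
by exists a; rewrite ?mem_head //; apply/max_idPl; apply: ltW.
Qed.

Unset Implicit Arguments.

Theorem lemma1p3 (R : realType) (v k lam mu : nat) (e : rel 'I_v)
    (s : seq R) :
  srg k lam mu e -> primitive_graph e ->
  eigen_list (adjacency R e) s ->
  Num.sqrt (k%:R / Num.sqrt (v%:R : R)) < k%:R / Lambda s.
Proof.
move=> [[esym eirr] [hdeg [hlam [hmu [hedge hnon]]]]] [hc1 hc2] [hcp hsort].
have [i0 _] : exists i : 'I_v, true by case: hedge => x _; exists x.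
have kpos := k_pos hdeg hedge.
have lamk := lam_lt_k eirr hdeg hlam hedge.
have mupos := mu_pos esym hmu hc1 hnon.
have muk := mu_lt_k eirr hdeg hmu hc2 hedge hnon.
have vge := v_ge eirr hdeg hnon.
have hkk := kk R esym eirr hdeg hlam hmu i0.
have hv : (k + 2)%:R <= v%:R :> R by rewrite ler_nat addn2.
rewrite natrD in hv.
have hm1 : 1 <= mu%:R :> R by rewrite ler1n.
have lamk2 : (lam.+2 <= k)%N.
  rewrite ltnNge; apply/negP => hle.
  have hlk : k = lam.+1 by apply/eqP; rewrite eqn_leq hle lamk.
  rewrite hlk -addn1 natrD in hkk hv.
  clear -hkk hv hm1; nra.
set A := adjacency R e.
have hsz := cp_size hcp.
have hsum : \sum_(x <- s) x = 0 by rewrite -(cp_trace hcp) trA.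
have hsq : \sum_(x <- s) x ^+ 2 = v%:R * k%:R.
  have hcp2 : char_poly (A *m A) = \prod_(y <- map (fun x => x ^+ 2) s) ('X - y%:P).
    by rewrite big_map; exact: cp_sq hcp.
  have := cp_trace hcp2; rewrite big_map => <-.
  by rewrite (AA_BM R esym eirr hdeg hlam hmu) trBM // mulrBl subrK mulrC.
have hroot := eig_root esym eirr hdeg hlam hmu hcp.
have hPk : Pq k lam mu (k%:R : R) = mu%:R * v%:R.
  by rewrite /Pq; apply: (@eq_lin3 _ 1 0 0 _ _ _ _ _ _ _ _ hkk hkk hkk); ring.
have hsumP : \sum_(x <- s) Pq k lam mu x = mu%:R * v%:R.
  rewrite /Pq !sumrB -mulr_sumr hsq hsum !sum_const_seq hsz; ring.
have muv0 : mu%:R * v%:R != 0 :> R.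
  rewrite mulf_neq0 // pnatr_eq0 -lt0n //.
  by apply: leq_ltn_trans (leq0n i0) (ltn_ord i0).
have hcount : count_mem (k%:R : R) s = 1%N.
  have : \sum_(x <- s) Pq k lam mu x = (count_mem (k%:R : R) s)%:R * Pq k lam mu k%:R.
    rewrite -sum_count; apply: eq_big_seq => x xs.
    have [->|nxk] := eqVneq x k%:R; first by rewrite ?eqxx mul1r.
    rewrite mul0r.
    by case: (hroot x xs) => // xk; rewrite xk eqxx in nxk.
  rewrite hsumP hPk => h.
  have : ((count_mem (k%:R : R) s)%:R - 1) * (mu%:R * v%:R) = 0 :> R.
    by rewrite mulrBl -h mul1r subrr.
  move/eqP; rewrite mulf_eq0 (negbTE muv0) orbF subr_eq0 pnatr_eq1 => /eqP //.
have hK1 : 1 <= k%:R :> R by rewrite ler1n.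
have hL0 : 0 <= lam%:R :> R by rewrite ler0n.
have hLK : lam%:R + 1 <= k%:R :> R by rewrite -[1]/(1%:R) -natrD ler_nat addn1.
have hM0 : 0 <= mu%:R :> R by rewrite ler0n.
have hMK : mu%:R <= k%:R :> R by rewrite ler_nat ltnW.
have hbd : forall x : R, Pq k lam mu x = 0 -> - k%:R <= x <= k%:R.
  move=> x; rewrite /Pq => hx; exact: root_bounds hK1 hL0 hLK hM0 hMK hx.
have vpos : (0 < v)%N by apply: leq_ltn_trans (leq0n i0) (ltn_ord i0).
destruct s as [|h t]; first by rewrite -hsz in vpos.
have hall : all (fun z => z <= h) t.
  have := order_path_min _ hsort; apply.
  by move=> a b c hab hbc; apply: le_trans hbc hab.
have hh : h = k%:R.
  have kin : (k%:R : R) \in h :: t by rewrite -has_pred1 has_count hcount.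
  apply/eqP; apply/negPn/negP => nhk.
  rewrite in_cons eq_sym (negbTE nhk) /= in kin.
  have kh : k%:R <= h := allP hall _ kin.
  case: (hroot h (mem_head _ _)) => [hk|Ph]; first by rewrite hk eqxx in nhk.
  have /andP [_ hk2] := hbd _ Ph.
  have : h < k%:R by rewrite lt_neqAle nhk hk2.
  by rewrite ltNge kh.
subst h.
have hct : count_mem (k%:R : R) t = 0%N.
  by move: hcount => /= /eqP; rewrite eqxx add1n eqSS => /eqP.
have ht : forall z, z \in t -> z != k%:R /\ Pq k lam mu z = 0.
  move=> z zt.
  have zk : z != k%:R.
    apply/eqP => zk; move/eqP: hct; apply/negP; rewrite -lt0n -has_count has_pred1 -zk //.
  split => //.
  by case: (hroot z (@mem_behead _ (k%:R :: t) _ zt)) => // zk'; rewrite zk' eqxx in zk.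
have hszt : size t = v.-1 by rewrite -hsz.
have hsumt : \sum_(z <- t) z = - k%:R.
  by move: hsum; rewrite big_cons => /eqP; rewrite addrC addr_eq0 => /eqP.
have hsqt : \sum_(z <- t) z ^+ 2 = v%:R * k%:R - k%:R ^+ 2.
  by move: hsq; rewrite big_cons => <-; rewrite addrAC subrr add0r.
have hmuk : mu%:R < k%:R :> R by rewrite ltr_nat.
have bound : forall x, x \in t -> x != 0 /\ x ^+ 2 < k%:R * Num.sqrt (v%:R : R).
  move=> x xt; have [xnk Px] := ht x xt.
  pose y := lam%:R - mu%:R - x.
  have hs : x + y = lam%:R - mu%:R by rewrite /y; ring.
  have hp : x * y = mu%:R - k%:R.
    by apply: (@eq_lin3 _ (-1) 0 0 _ _ _ _ _ _ _ _ Px Px Px); rewrite /y /Pq; ring.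
  have hxy : forall z, z \in t -> z = x \/ z = y.
    move=> z zt; have [_ Pz] := ht z zt.
    have : (z - x) * (z - y) = Pq k lam mu z.
      by apply: (@eq_lin3 _ (-z) 1 0 _ _ _ _ _ _ _ _ hs hp hp); rewrite /Pq; ring.
    rewrite Pz => /eqP; rewrite mulf_eq0 !subr_eq0 => /orP [/eqP ->|/eqP ->].
      by left.
    by right.
  have [hvv hc] := core esym eirr hdeg hlam hmu i0 mupos muk lamk2 hs hp hxy hszt hsumt hsqt.
  split.
    apply/eqP => x0; move: Px; rewrite x0 /Pq expr0n /= mulr0 => h0.
    by clear -h0 hmuk; lra.
  have c1 : (1 <= count_mem x t)%N by rewrite -has_count has_pred1.
  apply: (@fin_arith _ _ _ _ ((count_mem x t)%:R)) => //.
  - by rewrite ltr0n.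
  - by rewrite ler1n.
  - by move: hvv; rewrite -(ler_nat R) !natrD natrM.
  - have /andP [h1 h2] := hbd x Px.
    by clear -h1 h2 hK1; nra.
rewrite /Lambda /=.
have tn : t != [::].
  apply/eqP => t0; move: hszt; rewrite t0 /= => hv0.
  by move: vge; rewrite -(prednK vpos) -hv0.
have [z zt ->] := bigmax_attain tn.
have [z0 hz] := bound z zt.
apply: fin2 => //; first by rewrite ltr0n.
by rewrite sqrtr_gt0 ltr0n.
Qed.
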